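(* If the critical set $C_{\mathcal A,a}$ is nonempty, then it is a smooth $n$-dimensional subvariety of $U(\mathcal A)\subset\mathbb C^n\times\mathbb C^k$.
   Context: Let $0<k<n$, $J=\{1,\dots,n\}$. On $\mathbb C^k$ (coordinates $t_1,\dots,t_k$) fix nonzero linear functions $g_j=b^1_jt_1+\dots+b^k_jt_k$, $j\in J$, that span the dual space $(\mathbb C^k)^*$. On $\mathbb C^n\times\mathbb C^k$ (coordinates $z_1,\dots,z_n,t_1,\dots,t_k$) let $f_j=g_j+z_j$, $H_j=\{f_j=0\}$, and $U(\mathcal A)=\mathbb C^n\times\mathbb C^k\setminus\bigcup_jH_j$. Fix $a\in(\mathbb C^\times)^n$ and the (multivalued) master function $\Phi_{\mathcal A,a}=\sum_ja_j\log f_j$. The critical set is $C_{\mathcal A,a}=\{(x,u)\in U(\mathcal A):\partial\Phi_{\mathcal A,a}/\partial t_i(x,u)=0,\ i=1,\dots,k\}$, where $\partial\Phi_{\mathcal A,a}/\partial t_i=\sum_jb^i_ja_j/f_j$. *)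

(* Defs.v *)
From HB Require Import structures.
From mathcomp Require Import all_boot all_order all_algebra.
From mathcomp Require Import complex.
From mathcomp Require Import Rstruct.
From mathcomp Require Import mpoly.
Set Implicit Arguments. Unset Strict Implicit. Unset Printing Implicit Defensive.
Import GRing.Theory.
Local Open Scope ring_scope.

Definition Cx : numClosedFieldType := (Rdefinitions.R)[i].

(* Points of C^n x C^k are functions 'I_(n+k) -> Cx: coordinate [lshift k j]
   is z_j (j < n), coordinate [rshift n i] is t_i (i < k). *)
Definition zc n k (x : 'I_(n + k) -> Cx) (j : 'I_n) : Cx := x (lshift k j).
Definition tc n k (x : 'I_(n + k) -> Cx) (i : 'I_k) : Cx := x (rshift n i).

(* b : 'M_(k, n) with b i j = b^i_j, so g_j = \sum_i b i j t_i is column j. *)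
Definition gA n k (b : 'M[Cx]_(k, n)) (x : 'I_(n + k) -> Cx) (j : 'I_n) : Cx :=
  \sum_(i < k) b i j * tc x i.

Definition fA n k (b : 'M[Cx]_(k, n)) (x : 'I_(n + k) -> Cx) (j : 'I_n) : Cx :=
  gA b x j + zc x j.

Definition UA n k (b : 'M[Cx]_(k, n)) (x : 'I_(n + k) -> Cx) : Prop :=
  forall j : 'I_n, fA b x j != 0.

Definition dPhi_dt n k (b : 'M[Cx]_(k, n)) (a : 'I_n -> Cx)
    (x : 'I_(n + k) -> Cx) (i : 'I_k) : Cx :=
  \sum_(j < n) b i j * a j / fA b x j.

Definition critA n k (b : 'M[Cx]_(k, n)) (a : 'I_n -> Cx)
    (x : 'I_(n + k) -> Cx) : Prop :=
  UA b x /\ forall i : 'I_k, dPhi_dt b a x i = 0.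

Definition jacobian N m (h : 'I_m -> {mpoly Cx[N]}) (p : 'I_N -> Cx)
    : 'M[Cx]_(m, N) :=
  \matrix_(r < m, c < N) (mderiv c (h r)).@[p].

(* X is a smooth d-dimensional (closed algebraic) subvariety of the Zariski
   open set U of C^N:
   - X is contained in U and is Zariski closed in U (the common zero locus in
     U of finitely many polynomials);
   - near every point p of X (in a basic Zariski neighbourhood {g <> 0} of p
     intersected with U), X is the common zero set of N - d polynomials whose
     differentials at p are linearly independent (Jacobian of rank N - d). *)
Definition smooth_subvariety N (U X : ('I_N -> Cx) -> Prop) (d : nat) : Prop :=
  [/\ (forall x, X x -> U x),
      (exists F : seq {mpoly Cx[N]},
          forall x, X x <-> (U x /\ forall q, q \in F -> q.@[x] = 0)),
      (d <= N)%N &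
      forall p, X p ->
        exists (g : {mpoly Cx[N]}) (h : 'I_(N - d) -> {mpoly Cx[N]}),
          [/\ g.@[p] != 0,
              (forall x, U x -> g.@[x] != 0 ->
                 (X x <-> forall r, (h r).@[x] = 0)) &
              \rank (jacobian h p) = (N - d)%N]].

(* Main.v *)
Require Import Defs.
From HB Require Import structures.
From mathcomp Require Import all_boot all_order all_algebra.
From mathcomp Require Import complex Rstruct mpoly.
From mathcomp Require Import ring zify.
Import GRing.Theory.
Set Implicit Arguments. Unset Strict Implicit.
Local Open Scope ring_scope.

Lemma mderivXU N (i j : 'I_N) : ('X_j : {mpoly Cx[N]})^`M(i) = (j == i)%:R.
Proof.
rewrite mderivX mnm1E; case: (eqVneq j i) => [->|_].
  have := addmK U_(i) 0%MM; rewrite add0m => ->.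
  by rewrite mpolyX0 scale1r.
by rewrite scale0r.
Qed.

Lemma mderiv_prod0 N (v : 'I_N) (I : Type) (r : seq I) (P : pred I)
   (F : I -> {mpoly Cx[N]}) :
  (forall l, P l -> (F l)^`M(v) = 0) -> (\prod_(l <- r | P l) F l)^`M(v) = 0.
Proof.
move=> H; apply: (big_ind (fun p => p^`M(v) = 0)) => //.
- by rewrite -mpolyC1 mderivC.
- by move=> x y hx hy; rewrite mderivM hx hy mul0r mulr0 addr0.
Qed.

Section Main.
Variables (n k : nat) (b : 'M[Cx]_(k, n)) (a : 'I_n -> Cx).

Definition fP (j : 'I_n) : {mpoly Cx[n + k]} :=
  \sum_(i < k) b i j *: 'X_(rshift n i) + 'X_(lshift k j).
Definition hP (i : 'I_k) : {mpoly Cx[n + k]} :=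
  \sum_(j < n) (b i j * a j) *: \prod_(l < n | l != j) fP l.

Lemma meval_fP x j : (fP j).@[x] = fA b x j.
Proof.
rewrite /fP mevalD mevalXU /fA /gA /zc /tc; congr (_ + _).
rewrite (big_morph _ (mevalD x) (meval0 x)); apply: eq_bigr => i _.
by rewrite mevalZ mevalXU.
Qed.

Lemma meval_prod x (I : Type) (r : seq I) (P : pred I) (F : I -> {mpoly Cx[n + k]}) :
  (\prod_(l <- r | P l) F l).@[x] = \prod_(l <- r | P l) (F l).@[x].
Proof. exact: (big_morph _ (mevalM x) (meval1 x)). Qed.

Lemma meval_hP x i : (hP i).@[x] =
  \sum_(j < n) (b i j * a j) * \prod_(l < n | l != j) fA b x l.
Proof.
rewrite /hP (big_morph _ (mevalD x) (meval0 x)); apply: eq_bigr => j _.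
rewrite mevalZ meval_prod; congr (_ * _); apply: eq_bigr => l _.
exact: meval_fP.
Qed.

Lemma hP_dPhi x i : UA b x ->
  (hP i).@[x] = (\prod_(l < n) fA b x l) * dPhi_dt b a x i.
Proof.
move=> hU; rewrite meval_hP /dPhi_dt mulr_sumr; apply: eq_bigr => j _.
rewrite [in RHS](bigD1 j) //=.
have := hU j; move: (fA b x j) => F hF.
move: (\prod_(l < n | l != j) fA b x l) => Q.
field; exact hF.
Qed.

Lemma hP_zero x i : UA b x -> ((hP i).@[x] = 0 <-> dPhi_dt b a x i = 0).
Proof.
move=> hU; rewrite hP_dPhi //; split; last by move=> ->; rewrite mulr0.
move/eqP; rewrite mulf_eq0 => /orP [|/eqP //].
by rewrite prodf_seq_eq0 => /hasP [l _ /= /eqP]; have := hU l => /eqP.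
Qed.

Lemma mderiv_fP (l m : 'I_n) : (fP l)^`M(lshift k m) = (l == m)%:R.
Proof.
rewrite /fP mderivD mderivXU raddf_sum /=.
rewrite big1 ?add0r ?(inj_eq (@lshift_inj _ _)) // => i _.
rewrite mderivZ mderivXU.
suff -> : (rshift n i == lshift k m) = false by rewrite scaler0.
apply/negbTE/eqP => /(congr1 val) /=; have := ltn_ord m; lia.
Qed.

Lemma dprod (j m : 'I_n) :
  (\prod_(l < n | l != j) fP l)^`M(lshift k m) =
  if j == m then 0 else \prod_(l < n | (l != j) && (l != m)) fP l.
Proof.
case: (eqVneq j m) => [<-|ne].
  by apply: mderiv_prod0 => l hl; rewrite mderiv_fP (negbTE hl).
rewrite (bigD1 m) 1?eq_sym //= mderivM mderiv_fP eqxx mul1r.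
rewrite mderiv_prod0 ?mulr0 ?addr0 // => l /andP [_ hl].
by rewrite mderiv_fP (negbTE hl).
Qed.

Lemma deriv_hP p i m : critA b a p ->
  ((hP i)^`M(lshift k m)).@[p] =
  (- (\prod_(l < n) fA b p l) * a m / (fA b p m) ^+ 2) * b i m.
Proof.
move=> [hU hD]; have hS := hD i; rewrite /dPhi_dt in hS.
rewrite /hP (big_morph _ (mderivD (lshift k m)) (mderiv0 _ _)) (big_morph _ (mevalD p) (meval0 p)).
set P := \prod_(l < n) fA b p l.
have hQ j : j != m -> (\prod_(l < n | (l != j) && (l != m)) fP l).@[p]
    = P / (fA b p j * fA b p m).
  move=> ne; rewrite meval_prod /P [in RHS](bigD1 j) //= [in RHS](bigD1 m) 1?eq_sym //=.
  rewrite (eq_bigr (fun l => fA b p l)); last by move=> l _; rewrite meval_fP.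
  move: (\prod_(l < n | (l != j) && (l != m)) fA b p l) => Q.
  have := hU j; have := hU m; move: (fA b p j) (fA b p m) => Fj Fm h1 h2.
  field; by rewrite h1 h2.
rewrite (eq_bigr (fun j => (P / fA b p m) *
    (if j != m then b i j * a j / fA b p j else 0))); last first.
  move=> j _; rewrite mderivZ mevalZ dprod.
  case: (eqVneq j m) => [_|ne]; first by rewrite meval0 !mulr0.
  rewrite hQ //.
  have := hU j; have := hU m; move: (fA b p j) (fA b p m) => Fj Fm h1 h2.
  rewrite /=; field; by rewrite h1 h2.
rewrite -mulr_sumr -big_mkcond /=.
move: hS; rewrite (bigD1 m) //= => /eqP; rewrite addrC addr_eq0 => /eqP ->.
have := hU m; move: (fA b p m) => Fm h1.
field; exact h1.
Qed.

Lemma rank_castrows K (e : K = k) :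
  \rank (\matrix_(r < K, m < n) b (cast_ord e r) m) = \rank b.
Proof.
subst K; congr (\rank _); apply/matrixP => r m; by rewrite mxE cast_ord_id.
Qed.

End Main.

Theorem lemma3p5 (n k : nat) (hk : (0 < k)%N) (hkn : (k < n)%N)
    (b : 'M[Cx]_(k, n))
    (hg0 : forall j : 'I_n, col j b != 0)      (* each g_j is nonzero *)
    (hspan : \rank b = k)                      (* the g_j span (C^k)^* *)
    (a : 'I_n -> Cx) (ha : forall j, a j != 0) (* a in (C^x)^n *)
    (hne : exists x, critA b a x) :            (* C_{A,a} nonempty *)
  smooth_subvariety (@UA n k b) (critA b a) n.
Proof.
have e : (n + k - n)%N = k by rewrite addKn.
split.
- by move=> x [].
- exists [seq hP b a i | i <- enum 'I_k] => x; split.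
  + move=> [hU hD]; split => // q /mapP [i _ ->]; exact/(hP_zero _ _ hU).
  + move=> [hU hq]; split => // i; apply/(hP_zero _ _ hU); apply: hq.
    by apply/mapP; exists i; rewrite ?mem_enum.
- by rewrite leq_addr.
move=> p hp; exists 1, (fun r => hP b a (cast_ord e r)); split.
- by rewrite meval1 oner_neq0.
- move=> x hU _; split.
  + by move=> [_ hD] r; apply/(hP_zero _ _ hU).
  + move=> H; split => // i; apply/(hP_zero _ _ hU).
    by have := H (cast_ord (esym e) i); rewrite cast_ordKV.
set J := jacobian _ p.
have [hU _] := hp.
set P := \prod_(l < n) fA b p l.
have hP0 : P != 0 by apply/prodf_neq0 => l _; exact: hU.
set d := \row_(m < n) (- P * a m / fA b p m ^+ 2).
set B' := \matrix_(r < n + k - n, m < n) b (cast_ord e r) m.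
have hJS : J *m col_mx (1%:M : 'M_n) (0 : 'M_(k, n)) = B' *m diag_mx d.
  apply/matrixP => r m.
  rewrite -[J](hsubmxK J) mul_row_col mulmx0 addr0 mulmx1 mul_mx_diag !mxE.
  by rewrite deriv_hP // mulrC.
have hfree : row_free (diag_mx d).
  rewrite row_free_unit unitmxE det_diag unitfE; apply/prodf_neq0 => m _.
  rewrite mxE mulf_neq0 ?invr_neq0 ?expf_neq0 ?mulf_neq0 ?oppr_eq0 //; exact: hU.
apply/eqP; rewrite eqn_leq rank_leq_row /=.
have := mxrankM_maxl J (col_mx (1%:M : 'M_n) (0 : 'M_(k, n))).
rewrite hJS mxrankMfree // rank_castrows hspan => h; exact: leq_trans (eq_leq e) h.
Qed.
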